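(* Let $\alpha=2.06$, $a=0.19$, $b=0.5095$, and $f^+(x)=0$ for $x<a$, $f^+(x)=\left(\frac{x-a}{b-a}\right)^2$ for $x\in[a,b]$, $f^+(x)=1$ for $x>b$. Define \[ \mathcal{C}_{++-}(x,y,z)=\alpha\big(1+x+y-z-yzf^+(x)-xzf^+(y)-(1-z)f^+(x)f^+(y)\big)-\big(1+2z-2zf^+(x)-2zf^+(y)+f^+(x)f^+(y)\big). \] Then $\mathcal{C}_{++-}(x,y,z)\ge 0$ for all $x,y,z\in[0,1]$ satisfying the triangle inequalities $x\le y+z$, $y\le x+z$, $z\le x+y$.
   Context: $\mathcal{C}_{++-}(x,y,z)$ equals $\alpha LP(uvw)-ALG(uvw)$ for a triangle with two positive edges of lengths $x,y$ and one negative edge of length $z$ in the pivot rounding algorithm for correlation clustering on complete graphs, with positive edges cut with probability $f^+$ of their length and negative edges with probability $f^-(z)=z$. *)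

(* Defs.v *)
From Stdlib Require Import Reals Lra.
Open Scope R_scope.

Definition alpha : R := 206 / 100.
Definition a_par : R := 19 / 100.
Definition b_par : R := 5095 / 10000.

Definition fplus (x : R) : R :=
  if Rlt_dec x a_par then 0
  else if Rle_dec x b_par then ((x - a_par) / (b_par - a_par)) ^ 2
  else 1.

Definition C_ppm (x y z : R) : R :=
  alpha * (1 + x + y - z - y * z * fplus x - x * z * fplus y
           - (1 - z) * fplus x * fplus y)
  - (1 + 2 * z - 2 * z * fplus x - 2 * z * fplus y + fplus x * fplus y).

(* Main.v *)
Require Import Defs.
From Stdlib Require Import Reals.
From Stdlib Require Import Lra Psatz.
Open Scope R_scope.

Definition Cuv (x y z u v : R) : R :=
  alpha * (1 + x + y - z - y * z * u - x * z * v - (1 - z) * u * v)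
  - (1 + 2 * z - 2 * z * u - 2 * z * v + u * v).

Ltac bern l h n g :=
  let rec go i := match i with
   | O => assert (0 <= (h-g)^n) by (apply pow_le; lra)
   | S ?j => assert (0 <= (g-l)^i*(h-g)^(n-i)) by (apply Rmult_le_pos; apply pow_le; lra); go j
   end in go n.

Ltac SU := unfold Cuv, alpha; intros; subst.

Lemma conc K c0 c1 y0 y1 y : 0 <= K -> y0 <= y <= y1 ->
  0 <= c0 + c1*y0 - K*y0^2 -> 0 <= c0 + c1*y1 - K*y1^2 -> 0 <= c0 + c1*y - K*y^2.
Proof.
  intros HK Hy H0 H1.
  destruct (Req_dec y0 y1) as [E|E].
  - subst. replace y with y1 by lra. exact H1.
  - assert (Hd : 0 < y1 - y0) by lra.
    assert (Id : (y1-y0)*(c0 + c1*y - K*y^2) =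
       (y1-y)*(c0 + c1*y0 - K*y0^2) + (y-y0)*(c0 + c1*y1 - K*y1^2) + K*((y-y0)*(y1-y))*(y1-y0)) by ring.
    assert (0 <= (y1-y)*(c0 + c1*y0 - K*y0^2)) by (apply Rmult_le_pos; lra).
    assert (0 <= (y-y0)*(c0 + c1*y1 - K*y1^2)) by (apply Rmult_le_pos; lra).
    assert (0 <= K*((y-y0)*(y1-y))*(y1-y0)) by
      (apply Rmult_le_pos; [apply Rmult_le_pos; [lra| apply Rmult_le_pos; lra] | lra]).
    assert (0 <= (y1-y0)*(c0 + c1*y - K*y^2)) by lra.
    destruct (Rle_or_lt 0 (c0 + c1*y - K*y^2)) as [G|G]; [exact G|].
    exfalso. assert ((y1-y0)*(c0 + c1*y - K*y^2) < 0) by (apply Rmult_pos_neg; lra). lra.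
Qed.

Lemma Cuv_lin x y u v z1 z2 z : z1 <= z <= z2 ->
  0 <= Cuv x y z1 u v -> 0 <= Cuv x y z2 u v -> 0 <= Cuv x y z u v.
Proof.
  intros Hz H1 H2.
  set (c0 := Cuv x y 0 u v). set (c1 := Cuv x y 1 u v - Cuv x y 0 u v).
  assert (E : forall t, Cuv x y t u v = c0 + c1*t - 0*t^2)
    by (intro t; unfold c0, c1, Cuv; ring).
  rewrite E in *. apply (conc 0 c0 c1 z1 z2 z); lra.
Qed.

Lemma Cuv_sym x y z u v : Cuv x y z u v = Cuv y x z v u.
Proof. unfold Cuv; ring. Qed.

Lemma fplus_cases x : 0 <= x <= 1 ->
  (x < 19/100 /\ fplus x = 0) \/
  (exists s, 0 <= s <= 1 /\ x = 19/100 + 3195/10000*s /\ fplus x = s^2) \/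
  (5095/10000 < x /\ fplus x = 1).
Proof.
  intros Hx. unfold fplus, a_par, b_par.
  destruct (Rlt_dec x (19/100)) as [H1|H1]; [left; split; [lra|reflexivity]|].
  destruct (Rle_dec x (5095/10000)) as [H2|H2]; [|right; right; split; [lra|reflexivity]].
  right; left. exists ((x - 19/100) / (5095/10000 - 19/100)).
  split; [|split].
  - split; [apply Rmult_le_pos; [lra| apply Rlt_le, Rinv_0_lt_compat; lra]|].
    apply (Rmult_le_reg_r (5095/10000 - 19/100)); [lra|].
    unfold Rdiv; rewrite Rmult_assoc, Rinv_l; lra.
  - field.
  - reflexivity.
Qed.

Lemma E1_LL x y : 0 <= x <= y -> y < 19/100 -> 0 <= Cuv x y (y-x) 0 0.
Proof. SU. nra. Qed.
Lemma E1_LM x y t : 0 <= x < 19/100 -> 0 <= t <= 1 -> y = 19/100+3195/10000*t ->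
  0 <= Cuv x y (y-x) 0 (t^2).
Proof. SU.
  assert (0 <= (19/100+3195/10000*t-x)*t^2*(2-206/100*x)) by
    (apply Rmult_le_pos; [apply Rmult_le_pos|]; nra). nra. Qed.
Lemma E1_LH x y : 0 <= x < 19/100 -> 5095/10000 < y <= 1 -> 0 <= Cuv x y (y-x) 0 1.
Proof. SU. nra. Qed.
Lemma E1_MM x y s t : 0 <= s <= t -> t <= 1 -> x = 19/100+3195/10000*s -> y = 19/100+3195/10000*t ->
  0 <= Cuv x y (y-x) (s^2) (t^2).
Proof. SU.
assert (0 <= s^2 <= 1) by nra. assert (0 <= t^2 <= 1) by nra.
assert (0 <= s^2*t^2 <= s^2) by nra.
assert (0 <= (t-s)*s^2*(2-206/100*(19/100+3195/10000*t))) by (apply Rmult_le_pos; nra).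
assert (0 <= (t-s)*t^2*(2-206/100*(19/100+3195/10000*s))) by (apply Rmult_le_pos; nra).
assert (0 <= (t-s)*(s^2*t^2)) by nra.
assert (0 <= s*(1-s)) by nra.
nra. Qed.
Lemma E1_MH x y s : 0 <= s <= 1 -> 5095/10000 < y <= 1 -> x = 19/100+3195/10000*s ->
  0 <= Cuv x y (y-x) (s^2) 1.
Proof. SU.
assert (0 <= s^2 <= 1) by nra.
assert (0 <= (y-5095/10000)*(1-y)) by nra.
assert (0 <= (y-5095/10000)*s^2) by nra.
assert (0 <= (1-s)*s^2) by nra.
assert (0 <= (1-s)*s) by nra.
assert (0 <= (y-5095/10000)*(1-y)*s^2) by nra.
assert (0 <= (1-s)*(y-5095/10000)) by nra.
nra. Qed.
Lemma E1_HH x y : 5095/10000 < x <= y -> y <= 1 -> 0 <= Cuv x y (y-x) 1 1.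
Proof. SU. nra. Qed.

Lemma E2_LL x y : 0 <= x <= y -> y < 19/100 -> 0 <= Cuv x y (x+y) 0 0.
Proof. SU. nra. Qed.
Lemma E2_LH x y : 0 <= x < 19/100 -> 5095/10000 < y -> x + y <= 1 -> 0 <= Cuv x y (x+y) 0 1.
Proof. SU. nra. Qed.

Definition gLM x t := 206/100-1 - 2*(x+(19/100+3195/10000*t)) + (x+(19/100+3195/10000*t))*t^2*(2-206/100*x).
Lemma gLM0 t : 0 <= t <= 1 -> 0 <= gLM 0 t.
Proof. unfold gLM; intros. nra. Qed.
Lemma gLMa t : 0 <= t <= 1 -> 0 <= gLM (19/100) t.
Proof. unfold gLM; intros. assert (0 <= (t-52/100)^2) by apply pow2_ge_0.
  assert (0<= t^3) by (apply pow_le; lra). nra. Qed.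
Lemma E2_LM x y t : 0 <= x < 19/100 -> 0 <= t <= 1 -> y = 19/100+3195/10000*t ->
  0 <= Cuv x y (x+y) 0 (t^2).
Proof. intros. subst y. pose proof (gLM0 t H0). pose proof (gLMa t H0).
assert (E: Cuv x (19/100+3195/10000*t) (x+(19/100+3195/10000*t)) 0 (t^2) =
  (1 - x/(19/100)) * gLM 0 t + x/(19/100) * gLM (19/100) t + 206/100*t^2*x*(19/100-x)).
{ unfold Cuv, gLM, alpha. field. }
rewrite E. assert (0 <= t^2*x*(19/100-x)) by (apply Rmult_le_pos; nra).
assert (0 <= (1 - x/(19/100)) * gLM 0 t) by (apply Rmult_le_pos; [unfold Rdiv; nra| lra]).
assert (0 <= x/(19/100) * gLM (19/100) t) by (apply Rmult_le_pos; [unfold Rdiv; nra| lra]).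
nra. Qed.

Definition Fm (g m : R) : R :=
  3/10 - 2*(3195/10000)*g + (2*(19/100) + 3195/10000*g)*((2-206/100*(19/100))*(g^2-2*m) - 206/100*(3195/10000)*g*m)
  - (206/100*(1-(2*(19/100) + 3195/10000*g))+1)*m^2.
Lemma D1 g : 0 <= g <= 97/100 -> 0 <= Fm g (g^2/4).
Proof. intros. unfold Fm. bern 0 (97/100) 5%nat g. simpl in *. lra. Qed.
Lemma D2 g : 97/100 <= g <= 1240/639 -> 0 <= Fm g (g^2/4).
Proof. intros. unfold Fm. bern (97/100) (1240/639) 5%nat g. simpl in *. lra. Qed.
Lemma B1 g : 0 <= g <= 1 -> 0 <= Fm g 0.
Proof. intros. unfold Fm. bern 0 1 5%nat g. simpl in *. lra. Qed.
Lemma B2 g : 1 <= g <= 1240/639 -> 0 <= Fm g (g-1).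
Proof. intros. unfold Fm. bern 1 (1240/639) 5%nat g. simpl in *. lra. Qed.
Lemma Dall g : 0 <= g <= 1240/639 -> 0 <= Fm g (g^2/4).
Proof. intros. destruct (Rle_or_lt g (97/100)); [apply D1|apply D2]; lra. Qed.

Lemma Fm_quad g m : Fm g m =
  (3/10 - 2*(3195/10000)*g + (2*(19/100) + 3195/10000*g)*(2-206/100*(19/100))*g^2)
  + (-(2*(19/100) + 3195/10000*g)*(2*(2-206/100*(19/100)) + 206/100*(3195/10000)*g))*m
  - (206/100*(1-(2*(19/100) + 3195/10000*g))+1)*m^2.
Proof. unfold Fm. ring. Qed.

Lemma E2_MM x y s t : 0 <= s <= 1 -> 0 <= t <= 1 ->
  x = 19/100+3195/10000*s -> y = 19/100+3195/10000*t -> x + y <= 1 ->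
  0 <= Cuv x y (x+y) (s^2) (t^2).
Proof. intros Hs Ht Hx Hy Hxy.
  assert (E : Cuv x y (x+y) (s^2) (t^2) = Fm (s+t) (s*t))
    by (subst; unfold Cuv, Fm, alpha; field).
  rewrite E. clear E.
  assert (Hg : 0 <= s+t <= 1240/639) by (subst; lra).
  assert (Hm1 : s*t <= (s+t)^2/4) by (assert (0 <= (s-t)^2) by apply pow2_ge_0; lra).
  assert (HK : 0 <= 206/100*(1-(2*(19/100) + 3195/10000*(s+t)))+1) by lra.
  pose proof (Dall (s+t) Hg) as HD.
  rewrite Fm_quad in *.
  destruct (Rle_or_lt (s+t) 1) as [Hl|Hl].
  - pose proof (B1 (s+t) (conj (proj1 Hg) Hl)) as HB. rewrite Fm_quad in HB.
    eapply conc; [exact HK| | exact HB | exact HD]. split; [apply Rmult_le_pos; lra| exact Hm1].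
  - assert (HB : 0 <= Fm (s+t) ((s+t)-1)) by (apply B2; lra). rewrite Fm_quad in HB.
    eapply conc; [exact HK| | exact HB | exact HD]. split; [|exact Hm1].
    assert (0 <= (1-s)*(1-t)) by (apply Rmult_le_pos; lra). lra.
Qed.

Lemma E2_MH x y s : 0 <= s <= 1 -> x = 19/100+3195/10000*s -> 5095/10000 < y -> x + y <= 1 ->
  0 <= Cuv x y (x+y) (s^2) 1.
Proof. intros Hs Hx Hy Hxy.
  assert (E : forall yy, Cuv x yy (x+yy) (s^2) 1 =
     (206/100 - 1 - 206/100*x^2 + s^2*(x*(2+206/100) - 206/100 - 1))
     + (-(206/100)*x + s^2*(2 + 206/100 - 206/100*x))*yy - (206/100*s^2)*yy^2)
    by (intro yy; unfold Cuv, alpha; ring).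
  rewrite E.
  assert (HK : 0 <= 206/100*s^2) by nra.
  assert (H0 : 0 <= Cuv x (5095/10000) (x+5095/10000) (s^2) 1).
  { replace (Cuv x (5095/10000) (x+5095/10000) (s^2) 1) with (Fm (s+1) (s*1))
      by (subst; unfold Cuv, Fm, alpha; field).
    replace (s*1) with ((s+1)-1) by ring. apply B2. subst; lra. }
  assert (H1 : 0 <= Cuv x (1-x) (x+(1-x)) (s^2) 1).
  { replace (x+(1-x)) with 1 by ring. unfold Cuv, alpha.
    assert (0 <= s^2 <= 1) by nra.
    assert (0 <= (1-s^2)*(206/100*(1-x)-1)) by (apply Rmult_le_pos; lra). nra. }
  rewrite E in H0, H1.
  eapply conc; [exact HK| | exact H0 | exact H1]. lra.
Qed.

Lemma E3_H x y u : 0 <= x -> 5095/10000 < y <= 1 -> 0 <= u <= 1 -> 0 <= Cuv x y 1 u 1.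
Proof. SU. nra. Qed.

Definition cc := 206/100*(5095/10000) - 1.
Definition kk := 206/100*(3195/10000).
Definition M0 := 4*kk+4-2*cc.
Lemma E3S g : 0 <= g <= 38/639 -> 0 <= cc*(2*g-g^2) - g^2/4*(M0 - (kk+2)*g + g^2/4).
Proof. intros. unfold M0, cc, kk. bern 0 (38/639) 4%nat g. simpl in *. lra. Qed.
Lemma E3_MM0 s t : 0 <= s <= 1 -> 0 <= t <= 1 ->
  1 <= (19/100 + 3195/10000*s) + (19/100 + 3195/10000*t) ->
  0 <= Cuv (19/100 + 3195/10000*s) (19/100 + 3195/10000*t) 1 (s^2) (t^2).
Proof. intros.
set (SS := (1-s)+(1-t)). set (PP := (1-s)*(1-t)).
replace (Cuv _ _ _ _ _) with (cc*(2*SS-SS^2) - PP*(M0 - (kk+2)*SS + PP))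
 by (unfold Cuv, SS, PP, M0, cc, kk, alpha; field).
assert (HS: 0 <= SS <= 38/639) by (unfold SS; lra).
assert (HP: 0 <= PP <= SS^2/4). { unfold PP, SS; split. apply Rmult_le_pos; lra. assert (0 <= (s-t)^2) by apply pow2_ge_0. lra. }
pose proof (E3S SS HS).
assert (0 <= M0 - (kk+2)*SS) by (unfold M0, kk, cc; lra).
assert (PP*(M0 - (kk+2)*SS + PP) <= SS^2/4*(M0 - (kk+2)*SS + SS^2/4)) by nra.
lra. Qed.
Lemma E3_MM x y s t : 0 <= s <= 1 -> 0 <= t <= 1 ->
  x = 19/100+3195/10000*s -> y = 19/100+3195/10000*t -> 1 <= x + y ->
  0 <= Cuv x y 1 (s^2) (t^2).
Proof. intros; subst; apply E3_MM0; auto. Qed.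

Lemma C_Cuv x y z : C_ppm x y z = Cuv x y z (fplus x) (fplus y).
Proof. reflexivity. Qed.

Lemma fplus_01 x : 0 <= x <= 1 -> 0 <= fplus x <= 1.
Proof. intros H. destruct (fplus_cases x H) as [[_ E]|[[s [Hs [_ E]]]|[_ E]]]; rewrite E; try lra.
  split; nra. Qed.

Ltac regimes x y Hx Hy :=
  destruct (fplus_cases x Hx) as [[?HxL ?Ex]|[[?s [?Hs [?Xs ?Ex]]]|[?HxH ?Ex]]];
  destruct (fplus_cases y Hy) as [[?HyL ?Ey]|[[?t [?Ht [?Yt ?Ey]]]|[?HyH ?Ey]]];
  rewrite ?Ex, ?Ey.

Lemma E1g x y : 0 <= x -> x <= y -> y <= 1 -> 0 <= C_ppm x y (y-x).
Proof. intros. rewrite C_Cuv.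
  assert (Hx : 0 <= x <= 1) by lra. assert (Hy : 0 <= y <= 1) by lra.
  regimes x y Hx Hy; try (subst; lra).
  - apply E1_LL; lra.
  - apply (E1_LM x y t); auto; lra.
  - apply E1_LH; lra.
  - apply (E1_MM x y s t); auto; subst; lra.
  - apply (E1_MH x y s); auto; lra.
  - apply E1_HH; lra.
Qed.

Lemma E2g x y : 0 <= x -> x <= y -> y <= 1 -> x + y <= 1 -> 0 <= C_ppm x y (x+y).
Proof. intros. rewrite C_Cuv.
  assert (Hx : 0 <= x <= 1) by lra. assert (Hy : 0 <= y <= 1) by lra.
  regimes x y Hx Hy; try (subst; lra).
  - apply E2_LL; lra.
  - apply (E2_LM x y t); auto; lra.
  - apply E2_LH; lra.
  - apply (E2_MM x y s t); auto.
  - apply (E2_MH x y s); auto.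
Qed.

Lemma E3g x y : 0 <= x -> x <= y -> y <= 1 -> 1 <= x + y -> 0 <= C_ppm x y 1.
Proof. intros. rewrite C_Cuv.
  assert (Hx : 0 <= x <= 1) by lra. assert (Hy : 0 <= y <= 1) by lra.
  pose proof (fplus_01 x Hx) as Fx.
  regimes x y Hx Hy; try (subst; lra).
  - apply E3_H; lra.
  - apply (E3_MM x y s t); auto.
  - apply E3_H; lra.
  - apply E3_H; lra.
Qed.

Lemma main_le x y z : 0 <= x -> x <= y -> y <= 1 -> 0 <= z <= 1 ->
  y <= x + z -> z <= x + y -> 0 <= C_ppm x y z.
Proof. intros. rewrite C_Cuv.
  pose proof (E1g x y H H0 H1) as H1'. rewrite C_Cuv in H1'.
  destruct (Rle_or_lt (x+y) 1).
  - pose proof (E2g x y H H0 H1 H5) as H2'. rewrite C_Cuv in H2'.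
    apply (Cuv_lin _ _ _ _ (y-x) (x+y)); auto; lra.
  - pose proof (E3g x y H H0 H1 (Rlt_le _ _ H5)) as H2'. rewrite C_Cuv in H2'.
    apply (Cuv_lin _ _ _ _ (y-x) 1); auto; lra.
Qed.

Theorem lemma14 (x y z : R) :
  0 <= x <= 1 -> 0 <= y <= 1 -> 0 <= z <= 1 ->
  x <= y + z -> y <= x + z -> z <= x + y ->
  0 <= C_ppm x y z.
Proof.
  intros. destruct (Rle_or_lt x y).
  - apply main_le; lra.
  - rewrite C_Cuv, Cuv_sym, <- C_Cuv. apply main_le; lra.
Qed.
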